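(* Let $A$ be an order-unit space with order unit $1$, and let $L$ be a seminorm on $A$ (taking finite values) such that $L(1)=0$. Set $\mathcal B_1=\{a\in A: L(a)\le 1\}$, and let $\tilde A=A/\mathbb R 1$ with its quotient norm $\|\cdot\|^{\sim}$. Then: (a) $\rho_L$ gives $S(A)$ finite diameter if and only if the image of $\mathcal B_1$ in $\tilde A$ is bounded for $\|\cdot\|^{\sim}$; (b) the topology on $S(A)$ determined by $\rho_L$ coincides with the weak-$*$ topology if and only if the image of $\mathcal B_1$ in $\tilde A$ is totally bounded for $\|\cdot\|^{\sim}$.
   Context: An order-unit space may be taken concretely as a real linear space of self-adjoint bounded operators on a Hilbert space containing the identity operator $1$ (the order unit), with the usual operator ordering and operator norm (it need not be complete). Its state space $S(A)$ is the set of positive linear functionals $\mu$ on $A$ with $\mu(1)=1$, with the weak-$*$ topology. For a seminorm $L$ on $A$, the (possibly $+\infty$-valued) metric $\rho_L$ on $S(A)$ is $\rho_L(\mu,\nu)=\sup\{|\mu(a)-\nu(a)|: a\in A,\ L(a)\le 1\}$. *)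

(* Defs.v *)
From HB Require Import structures.
From mathcomp Require Import all_boot all_order all_algebra.
From mathcomp Require Import boolp classical_sets reals constructive_ereal ereal.
Set Implicit Arguments. Unset Strict Implicit. Unset Printing Implicit Defensive.
Import Order.TTheory GRing.Theory Num.Theory.
Local Open Scope classical_set_scope.
Local Open Scope ring_scope.

Section OUS.
Variables (R : realType) (V : lmodType R).

Definition ous_le (pos : set V) (x y : V) : Prop := pos (y - x).

Definition is_order_unit_space (pos : set V) (e : V) : Prop :=
  [/\ (forall x y, pos x -> pos y -> pos (x + y)),
      (forall (r : R) x, 0 <= r -> pos x -> pos (r *: x)),
      (forall x, pos x -> pos (- x) -> x = 0),
      (forall x, exists r : R, 0 < r /\ ous_le pos (- (r *: e)) x /\ ous_le pos x (r *: e)) &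
      (forall x, (forall r : R, 0 < r -> pos (r *: e + x)) -> pos x)].

Definition ous_norm (pos : set V) (e : V) (x : V) : R :=
  inf [set r : R | 0 <= r /\ ous_le pos (- (r *: e)) x /\ ous_le pos x (r *: e)].

Definition quot_norm (pos : set V) (e : V) (a : V) : R :=
  inf [set ous_norm pos e (a - t *: e) | t in [set: R]].

Definition is_state (pos : set V) (e : V) (mu : V -> R) : Prop :=
  [/\ (forall (r : R) x y, mu (r *: x + y) = r * mu x + mu y),
      (forall x, pos x -> 0 <= mu x) &
      mu e = 1].

Definition is_seminorm (L : V -> R) : Prop :=
  (forall x y, L (x + y) <= L x + L y) /\ (forall (r : R) x, L (r *: x) = `|r| * L x).

Definition rhoL (L : V -> R) (mu nu : V -> R) : \bar R :=
  ereal_sup [set (`|mu a - nu a|)%:E | a in [set a | L a <= 1]].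

Definition finite_diameter (pos : set V) (e : V) (L : V -> R) : Prop :=
  exists M : R, forall mu nu, is_state pos e mu -> is_state pos e nu ->
    (rhoL L mu nu <= M%:E)%E.

Definition B1_quot_bounded (pos : set V) (e : V) (L : V -> R) : Prop :=
  exists M : R, forall a, L a <= 1 -> quot_norm pos e a <= M.

Definition B1_quot_totally_bounded (pos : set V) (e : V) (L : V -> R) : Prop :=
  forall eps : R, 0 < eps -> exists s : seq V,
    forall a, L a <= 1 -> exists2 b, b \in s & quot_norm pos e (a - b) < eps.

Definition weakstar_open (pos : set V) (e : V) (U : set (V -> R)) : Prop :=
  U `<=` is_state pos e /\
  forall mu, U mu -> exists (s : seq V) (eps : R), 0 < eps /\
    forall nu, is_state pos e nu -> (forall a, a \in s -> `|nu a - mu a| < eps) -> U nu.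

Definition rhoL_open (pos : set V) (e : V) (L : V -> R) (U : set (V -> R)) : Prop :=
  U `<=` is_state pos e /\
  forall mu, U mu -> exists eps : R, 0 < eps /\
    forall nu, is_state pos e nu -> (rhoL L mu nu < eps%:E)%E -> U nu.

Definition rhoL_topology_is_weakstar (pos : set V) (e : V) (L : V -> R) : Prop :=
  forall U : set (V -> R), rhoL_open pos e L U <-> weakstar_open pos e U.

End OUS.

(* Main.v *)
Require Import Defs.
From HB Require Import structures.
From mathcomp Require Import all_boot all_order all_algebra.
From mathcomp Require Import all_classical all_reals all_analysis.
From mathcomp Require Import ring lra.
Import Order.TTheory GRing.Theory Num.Theory.
Local Open Scope classical_set_scope.
Local Open Scope ring_scope.
Import numFieldTopology.Exports numFieldNormedType.Exports.
Set Implicit Arguments. Unset Strict Implicit. Unset Printing Implicit Defensive.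
Section HB.
Variables (R : realType) (V : lmodType R).

Lemma infimg_le (T : Type) (D : set T) (f : T -> R) (b : R) t :
  (forall s, D s -> b <= f s) -> D t -> inf [set f s | s in D] <= f t.
Proof.
move=> hb Dt; apply: ge_inf; last by exists t.
by exists b => _ [s Ds <-]; exact: hb.
Qed.

Lemma le_infimg (T : Type) (D : set T) (f : T -> R) (c : R) :
  (exists t, D t) -> (forall s, D s -> c <= f s) -> c <= inf [set f s | s in D].
Proof.
move=> [t Dt] hc; apply: lb_le_inf; first by exists (f t), t.
by move=> _ [s Ds <-]; exact: hc.
Qed.

Definition sublin (q : V -> R) :=
  (forall x y, q (x + y) <= q x + q y) /\
  (forall (l : R) x, 0 < l -> q (l *: x) = l * q x).

Lemma sublin0 q : sublin q -> q 0 = 0.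
Proof.
move=> [_ hh]; have := hh 2 0 (ltr0Sn _ 1); rewrite scaler0 => h; lra.
Qed.

Lemma sublinN q x : sublin q -> - q (- x) <= q x.
Proof.
move=> hq; have := hq.1 x (- x); rewrite subrr (sublin0 hq); lra.
Qed.

Definition Tx (q : V -> R) (x y : V) : R :=
  inf [set q (y + t *: x) - t * q x | t in [set t : R | 0 <= t]].

Lemma Tx_lb q x y t : sublin q -> 0 <= t -> - q (- y) <= q (y + t *: x) - t * q x.
Proof.
move=> hq t0.
have ht : q (t *: x) = t * q x.
  have [->|tp] := eqVneq t 0; first by rewrite mul0r scale0r (sublin0 hq).
  by rewrite hq.2 // lt_def tp.
have := hq.1 (y + t *: x) (- y); rewrite addrC addKr ht => h; lra.
Qed.

Lemma Tx_le q x y t : sublin q -> 0 <= t -> Tx q x y <= q (y + t *: x) - t * q x.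
Proof.
move=> hq t0; apply: (@infimg_le _ _ (fun t => q (y + t *: x) - t * q x) (- q (- y))) => //.
by move=> s s0; exact: Tx_lb.
Qed.

Lemma Tx_ge q x y c : (forall t, 0 <= t -> c <= q (y + t *: x) - t * q x) -> c <= Tx q x y.
Proof. by move=> h; apply: le_infimg => //; exists 0 => /=. Qed.

Lemma Tx_leq q x y : sublin q -> Tx q x y <= q y.
Proof. by move=> hq; have := Tx_le x y hq (lexx 0); rewrite scale0r addr0 mul0r subr0. Qed.

Lemma Tx_sublin q x : sublin q -> sublin (Tx q x).
Proof.
move=> hq; split.
- move=> y1 y2.
  rewrite -lerBlDr; apply: Tx_ge.
  move=> t1 t10; rewrite lerBlDr -lerBlDl; apply: Tx_ge.
  move=> t2 t20; rewrite lerBlDl.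
  apply: le_trans (Tx_le x (y1 + y2) hq (addr_ge0 t10 t20)) _.
  have := hq.1 (y1 + t1 *: x) (y2 + t2 *: x).
  have -> : y1 + t1 *: x + (y2 + t2 *: x) = y1 + y2 + (t1 + t2) *: x.
    by rewrite scalerDl; rewrite addrACA.
  by move=> h; rewrite mulrDl; lra.
- move=> l y lp; apply/eqP; rewrite eq_le; apply/andP; split.
  + rewrite -ler_pdivrMl //; apply: Tx_ge.
    move=> t t0; rewrite ler_pdivrMl //.
    apply: le_trans (Tx_le x (l *: y) hq (mulr_ge0 (ltW lp) t0)) _.
    by rewrite -scalerA -scalerDr hq.2 // mulrBr mulrA.
  + apply: Tx_ge => t t0.
    have := Tx_le x y hq (divr_ge0 t0 (ltW lp)); rewrite -(ler_pM2l lp) => h.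
    apply: le_trans h _.
    have E1 : l * (t / l) = t by rewrite mulrCA divff ?gt_eqF // mulr1.
    by rewrite mulrBr -hq.2 // scalerDr scalerA E1 mulrA E1.
Qed.

Definition linear_eq (mu : V -> R) := forall (r : R) x y, mu (r *: x + y) = r * mu x + mu y.

Lemma HB_min (q0 : V -> R) : sublin q0 ->
  exists mu : V -> R, linear_eq mu /\ (forall x, mu x <= q0 x).
Proof.
move=> hq0.
pose T := {q : V -> R | sublin q /\ (forall x, q x <= q0 x)}.
pose t0 : T := exist _ q0 (conj hq0 (fun x => lexx _)).
pose Rl (s t : T) := `[< forall x, sval t x <= sval s x >].
have [| | |t tmax] := @ZL_preorder T t0 Rl.
- by move=> s; apply/asboolP.
- move=> a b c /asboolP hab /asboolP hbc; apply/asboolP => x; exact: le_trans (hbc x) (hab x).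
- move=> A Atot.
  have [[s0 As0]|A0] := pselect (exists s, A s); last first.
    by exists t0 => s As; exfalso; apply: A0; exists s.
  pose m x := inf [set sval s x | s in A].
  have lbA x s : A s -> - q0 (- x) <= sval s x.
    move=> _; case: s => q [hq hqq] /=.
    by apply: le_trans (sublinN x hq); rewrite lerN2.
  have mle x s : A s -> m x <= sval s x.
    by move=> As; apply: (@infimg_le _ _ (fun s => sval s x) (- q0 (- x))) => // s' As'; exact: lbA.
  have mge x c : (forall s, A s -> c <= sval s x) -> c <= m x.
    by move=> h; apply: le_infimg => //; exists s0.
  have msub : sublin m.
    split.
    - move=> x y; rewrite -lerBlDr; apply: (mge) => s1 As1.
      rewrite lerBlDr -lerBlDl; apply: (mge) => s2 As2; rewrite lerBlDl.
      have [/asboolP h12|/asboolP h21] := Atot _ _ As1 As2.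
      + apply: le_trans (mle _ _ As2) _; case: s2 As2 h12 => q2 [hq2 _] /= _ h12.
        by apply: le_trans (hq2.1 x y) _; rewrite lerD2r.
      + apply: le_trans (mle _ _ As1) _; case: s1 As1 h21 => q1 [hq1 _] /= _ h21.
        by apply: le_trans (hq1.1 x y) _; rewrite lerD2l.
    - move=> l x lp; apply/eqP; rewrite eq_le; apply/andP; split.
      + rewrite -ler_pdivrMl //; apply: (mge) => s As; rewrite ler_pdivrMl //.
        apply: le_trans (mle _ _ As) _; case: s As => q [hq _] /= _.
        by rewrite hq.2.
      + apply: (mge) => s As; case: s As => q [hq hqq] /= As.
        by rewrite hq.2 // ler_pM2l //; exact: (mle _ (exist _ q (conj hq hqq)) As).
  have mq0 x : m x <= q0 x.
    apply: le_trans (mle _ _ As0) _; case: s0 As0 => q [hq hqq] /= _; exact: hqq.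
  exists (exist _ m (conj msub mq0)) => s As; apply/asboolP => x /=; exact: mle.
- case: t tmax => q [hq hqq] tmax.
  have qT x y : q y <= Tx q x y.
    pose t' : T := exist _ (Tx q x) (conj (Tx_sublin x hq) (fun y => le_trans (Tx_leq x y hq) (hqq y))).
    have /tmax/asboolP h : Rl (exist _ q (conj hq hqq)) t' by apply/asboolP => z /=; exact: Tx_leq.
    exact: h.
  have qN x : q (- x) = - q x.
    apply/eqP; rewrite eq_le; apply/andP; split.
    + have := le_trans (qT x (- x)) (Tx_le x (- x) hq ler01).
      by rewrite scale1r addNr (sublin0 hq) mul1r add0r.
    + by have := sublinN x hq; lra.
  have qZ (r : R) x : q (r *: x) = r * q x.
    have [rn|rp|r0] := ltgtP r 0.
    + rewrite -(opprK r) scaleNr qN hq.2 ?oppr_gt0 //; lra.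
    + exact: hq.2.
    + by rewrite r0 scale0r mul0r (sublin0 hq).
  exists q; split => // r x y; apply/eqP; rewrite eq_le; apply/andP; split.
  + by rewrite -qZ; exact: hq.1.
  + have := hq.1 (r *: x + y) (- (r *: x)); rewrite addrC addKr qN qZ; lra.
Qed.

End HB.
Section OUS2.
Variables (R : realType) (V : lmodType R) (pos : set V) (e : V).
Hypothesis HA : is_order_unit_space pos e.

Lemma inv_ge0' (x : R) : 0 < x -> 0 <= x^-1.
Proof. by move=> h; rewrite invr_ge0 ltW. Qed.
Lemma oppr_gt0' (x : R) : x < 0 -> 0 < - x.
Proof. by rewrite oppr_gt0. Qed.

Lemma posD x y : pos x -> pos y -> pos (x + y).
Proof. by case: HA => h *; exact: h. Qed.
Lemma posZ (r : R) x : 0 <= r -> pos x -> pos (r *: x).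
Proof. by case: HA => _ h *; exact: h. Qed.
Lemma pos_anti x : pos x -> pos (- x) -> x = 0.
Proof. by case: HA => _ _ h *; exact: h. Qed.
Lemma ou x : exists r : R, 0 < r /\ pos (x + r *: e) /\ pos (r *: e - x).
Proof.
case: HA => _ _ _ h _; have [r [r0 [h1 h2]]] := h x.
by exists r; split => //; split => //; move: h1; rewrite /ous_le opprK.
Qed.
Lemma pos0 : pos 0.
Proof. have [r [_ [h _]]] := ou 0; by have := posZ (lexx 0) h; rewrite scale0r. Qed.
Lemma pos_e : pos e.
Proof.
have [r [r0 [h _]]] := ou 0; move: h; rewrite add0r => h.
by have := posZ (inv_ge0' r0) h; rewrite scalerA mulVf ?gt_eqF // scale1r.
Qed.
Lemma e0_triv : e = 0 -> forall x : V, x = 0.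
Proof.
move=> e0 x; have [r [_ [h1 h2]]] := ou x; move: h1 h2; rewrite e0 scaler0 add0r addr0.
exact: pos_anti.
Qed.
Lemma pos_ce (c : R) : e != 0 -> pos (c *: e) -> 0 <= c.
Proof.
move=> ne h; rewrite leNgt; apply/negP => cn.
have := posZ (inv_ge0' (oppr_gt0' cn)) h.
rewrite scalerA invrN mulNr mulVf ?lt_eqF // scaleN1r => h2.
by move/eqP: ne; apply; apply: pos_anti h2; exact: pos_e.
Qed.

Definition Sx x := [set r : R | pos (r *: e - x)].
Definition pf x := inf (Sx x).

Lemma Sx_ne x : exists r, Sx x r.
Proof. by have [r [_ [_ h]]] := ou x; exists r. Qed.

Lemma Sx_lb x : e != 0 -> exists b, forall r, Sx x r -> b <= r.
Proof.
move=> ne; have [r0 [_ [h _]]] := ou x; exists (- r0) => r hr.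
have := posD hr h; rewrite addrA subrK -scalerDl => /(pos_ce ne); lra.
Qed.

Lemma pf_le x r : e != 0 -> Sx x r -> pf x <= r.
Proof.
move=> ne hr; apply: ge_inf; last by [].
by have [b hb] := Sx_lb x ne; exists b.
Qed.

Lemma pf_ge x c : (forall r, Sx x r -> c <= r) -> c <= pf x.
Proof. by move=> h; apply: lb_le_inf; [exact: Sx_ne | exact: h]. Qed.

Lemma pf_sublin : e != 0 -> sublin pf.
Proof.
move=> ne; split.
- move=> x y; rewrite -lerBlDr; apply: pf_ge => r1 h1.
  rewrite lerBlDr -lerBlDl; apply: pf_ge => r2 h2; rewrite lerBlDl.
  apply: pf_le => //; rewrite /Sx /=.
  have -> : (r1 + r2) *: e - (x + y) = (r1 *: e - x) + (r2 *: e - y).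
    by rewrite scalerDl opprD addrACA.
  exact: posD.
- move=> l x lp; apply/eqP; rewrite eq_le; apply/andP; split.
  + rewrite -ler_pdivrMl //; apply: pf_ge => r h; rewrite ler_pdivrMl //.
    apply: pf_le => //; rewrite /Sx /= -scalerA -scalerBr.
    exact: posZ (ltW lp) h.
  + apply: pf_ge => s h; rewrite mulrC -ler_pdivlMr //.
    apply: pf_le => //; rewrite /Sx /=.
    have -> : s / l *: e - x = l^-1 *: (s *: e - l *: x).
      by rewrite scalerBr !scalerA mulVf ?gt_eqF // scale1r mulrC.
    exact: posZ (inv_ge0' lp) h.
Qed.

Lemma lin0 (mu : V -> R) : linear_eq mu -> mu 0 = 0.
Proof. by move=> h; have := h 1 0 0; rewrite scaler0 addr0 mul1r; lra. Qed.
Lemma linD (mu : V -> R) x y : linear_eq mu -> mu (x + y) = mu x + mu y.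
Proof. by move=> h; rewrite -[x]scale1r h mul1r scale1r. Qed.
Lemma linZ (mu : V -> R) (r : R) x : linear_eq mu -> mu (r *: x) = r * mu x.
Proof. by move=> h; rewrite -[r *: x]addr0 h (lin0 h) addr0. Qed.
Lemma linN (mu : V -> R) x : linear_eq mu -> mu (- x) = - mu x.
Proof. by move=> h; rewrite -scaleN1r (linZ _ _ h) mulN1r. Qed.
Lemma linB (mu : V -> R) x y : linear_eq mu -> mu (x - y) = mu x - mu y.
Proof. by move=> h; rewrite (linD _ _ h) (linN _ h). Qed.

Lemma state_lin mu : is_state pos e mu -> linear_eq mu.
Proof. by case. Qed.

Lemma state_le mu x (r : R) : is_state pos e mu -> pos (r *: e - x) -> mu x <= r.
Proof.
move=> [hl hp he] h; have := hp _ h; rewrite (linB _ _ hl) (linZ _ _ hl) he mulr1; lra.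
Qed.

Lemma state_of_lin mu : e != 0 -> linear_eq mu -> (forall x, mu x <= pf x) -> is_state pos e mu.
Proof.
move=> ne hl hle; split => //.
- move=> x px; have s0 : Sx (- x) 0 by rewrite /Sx /= scale0r add0r opprK.
  by have := le_trans (hle (- x)) (pf_le ne s0); rewrite (linN _ hl) oppr_le0.
- have s1 : Sx e 1 by rewrite /Sx /= scale1r subrr; exact: pos0.
  have s2 : Sx (- e) (-1) by rewrite /Sx /= scaleN1r subrr; exact: pos0.
  have h1 := le_trans (hle e) (pf_le ne s1).
  have h2 := le_trans (hle (- e)) (pf_le ne s2).
  rewrite (linN _ hl) in h2; lra.
Qed.

Lemma exists_state a : e != 0 -> exists mu, is_state pos e mu /\ pf a <= mu a.
Proof.
move=> ne; have hs := pf_sublin ne.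
have [mu [hl hle]] := HB_min (Tx_sublin a hs).
exists mu; split.
  by apply: state_of_lin => // x; exact: le_trans (hle x) (Tx_leq _ _ hs).
have := le_trans (hle (- a)) (Tx_le a (- a) hs ler01).
by rewrite scale1r addNr (sublin0 hs) (linN _ hl) mul1r; lra.
Qed.

Lemma ous_norm_ge0 x : 0 <= ous_norm pos e x.
Proof.
apply: lb_le_inf; last by move=> r [].
by have [r [r0 [h1 h2]]] := ou x; exists r; split; [exact: ltW|split; rewrite /ous_le ?opprK].
Qed.

Lemma quot_le a (r1 r2 : R) : pos (r1 *: e - a) -> pos (a + r2 *: e) -> 0 <= r1 + r2 ->
  quot_norm pos e a <= (r1 + r2) / 2.
Proof.
move=> h1 h2 h0.
apply: le_trans (_ : quot_norm pos e a <= ous_norm pos e (a - ((r1 - r2) / 2) *: e)) _.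
  apply: ge_inf; last by exists ((r1 - r2) / 2).
  by exists 0 => _ [t _ <-]; exact: ous_norm_ge0.
apply: ge_inf; first by exists 0 => r [].
split; first by apply: divr_ge0.
rewrite /ous_le; split.
- have -> : a - (r1 - r2) / 2 *: e - - ((r1 + r2) / 2 *: e) = a + r2 *: e.
    rewrite opprK -addrA -scaleNr -scalerDl; congr (_ + _ *: _); lra.
  exact: h2.
- have -> : (r1 + r2) / 2 *: e - (a - (r1 - r2) / 2 *: e) = r1 *: e - a.
    rewrite opprB addrA -scalerDl; congr (_ *: _ - _); lra.
  exact: h1.
Qed.

Lemma key_est a : e != 0 -> exists mu nu, [/\ is_state pos e mu, is_state pos e nu &
  quot_norm pos e a <= (mu a - nu a) / 2].
Proof.
move=> ne; have [mu [hmu pmu]] := exists_state a ne.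
have [nu [hnu pnu]] := exists_state (- a) ne.
exists mu, nu; split => //.
rewrite (linN _ (state_lin hnu)) in pnu.
apply/ler_addgt0Pr => eps eps0.
have hinf x : has_inf (Sx x).
  by split; [exact: Sx_ne | have [b hb] := Sx_lb x ne; exists b].
have [r1 h1 lt1] := inf_adherent (divr_gt0 eps0 (ltr0Sn _ 1)) (hinf a).
have [r2 h2 lt2] := inf_adherent (divr_gt0 eps0 (ltr0Sn _ 1)) (hinf (- a)).
move: h1 h2; rewrite /Sx /= opprK => h1 h2.
have h0 : 0 <= r1 + r2.
  apply: (pos_ce ne).
  suff -> : (r1 + r2) *: e = r1 *: e - a + (r2 *: e + a) by exact: posD.
  by rewrite addrACA addNr addr0 scalerDl.
have := quot_le h1 (eq_ind _ pos h2 _ (addrC _ _)) h0.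
rewrite /pf in pmu pnu; lra.
Qed.

Lemma state_diff_quot mu nu a : is_state pos e mu -> is_state pos e nu ->
  `|mu a - nu a| <= 2 * quot_norm pos e a.
Proof.
move=> hmu hnu.
have key t r : 0 <= r -> pos (a - t *: e + r *: e) -> pos (r *: e - (a - t *: e)) ->
  `|mu a - nu a| <= 2 * r.
  move=> r0 h1 h2.
  have m1 := state_le hmu h2; have n1 := state_le hnu h2.
  have m2 : - (mu (a - t *: e)) <= r.
    by rewrite -(linN _ (state_lin hmu)); apply: state_le hmu _; rewrite opprK addrC.
  have n2 : - (nu (a - t *: e)) <= r.
    by rewrite -(linN _ (state_lin hnu)); apply: state_le hnu _; rewrite opprK addrC.
  move: m1 n1 m2 n2; rewrite !(linB _ _ (state_lin hmu)) !(linB _ _ (state_lin hnu)).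
  rewrite !(linZ _ _ (state_lin hmu)) !(linZ _ _ (state_lin hnu)).
  case: hmu => _ _ ->; case: hnu => _ _ ->.
  rewrite ler_norml; move=> *; apply/andP; split; lra.
rewrite -ler_pdivrMl //; apply: le_infimg.
  by exists 0.
move=> t _; apply: lb_le_inf.
  by have [r [r0 [h1 h2]]] := ou (a - t *: e); exists r; split; [exact: ltW|split; rewrite /ous_le ?opprK].
move=> r [r0 [h1 h2]]; rewrite ler_pdivrMl //.
by apply: key r0 _ h2; move: h1; rewrite /ous_le opprK.
Qed.

End OUS2.
Section Main.
Variables (R : realType) (V : lmodType R) (pos : set V) (e : V).
Hypothesis HA : is_order_unit_space pos e.
Variable L : V -> R.
Hypothesis HL : is_seminorm L.

Lemma L0 : L 0 = 0.
Proof. by have := HL.2 0 0; rewrite scale0r normr0 mul0r. Qed.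
Lemma L_ge0 x : 0 <= L x.
Proof.
have := HL.1 x (- x); rewrite subrr L0 -scaleN1r HL.2 normrN normr1 mul1r; lra.
Qed.
Lemma LN x : L (- x) = L x.
Proof. by rewrite -scaleN1r HL.2 normrN normr1 mul1r. Qed.

Lemma rho_ub mu nu a : L a <= 1 -> ((`|mu a - nu a|)%:E <= rhoL L mu nu)%E.
Proof. by move=> h; apply: ereal_sup_ubound; exists a. Qed.

Lemma rho_le mu nu (c : R) : (forall a, L a <= 1 -> `|mu a - nu a| <= c) ->
  (rhoL L mu nu <= c%:E)%E.
Proof. by move=> h; apply: ge_ereal_sup => _ [a ha <-]; rewrite lee_fin; exact: h. Qed.

Lemma rho_lt mu nu a (c : R) : L a <= 1 -> (rhoL L mu nu < c%:E)%E -> `|mu a - nu a| < c.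
Proof. by move=> h1 h2; rewrite -lte_fin; exact: le_lt_trans (rho_ub mu nu h1) h2. Qed.

Lemma quot0 : quot_norm pos e 0 <= 0.
Proof.
have h0 : pos 0 := pos0 HA.
apply: le_trans (@quot_le _ _ _ _ HA 0 0 0 _ _ _) _.
- by rewrite scale0r subr0.
- by rewrite scale0r addr0.
- by rewrite addr0.
- by rewrite addr0 mul0r.
Qed.

Lemma part_a : finite_diameter pos e L <-> B1_quot_bounded pos e L.
Proof.
split.
- move=> [M hM].
  have [e0|ne] := eqVneq e 0.
    by exists 0 => a _; rewrite (e0_triv HA e0 a); exact: quot0.
  exists (M / 2) => a ha.
  have [mu [nu [hmu hnu hq]]] := key_est HA a ne.
  apply: le_trans hq _; rewrite ler_pM2r // -lee_fin.
  apply: le_trans (hM _ _ hmu hnu); apply: le_trans (rho_ub _ _ ha).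
  by rewrite lee_fin real_ler_norm // num_real.
- move=> [M hM]; exists (2 * M) => mu nu hmu hnu; apply: rho_le => a ha.
  apply: le_trans (state_diff_quot HA a hmu hnu) _; rewrite ler_pM2l //; exact: hM.
Qed.

Lemma le_sum_seqF (F : V -> R) (s : seq V) a : (forall x, 0 <= F x) -> a \in s -> F a <= \sum_(x <- s) F x.
Proof.
move=> F0; elim: s => // b s IH; rewrite in_cons big_cons => /orP[/eqP ->|h].
  by rewrite lerDl; apply: sumr_ge0 => x _; exact: F0.
by apply: le_trans (IH h) _; rewrite lerDr; exact: F0.
Qed.

Lemma le_sum_seq (s : seq V) a : a \in s -> L a <= \sum_(x <- s) L x.
Proof. exact: le_sum_seqF L_ge0. Qed.

Lemma part_b_wk : B1_quot_totally_bounded pos e L -> rhoL_topology_is_weakstar pos e L.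
Proof.
move=> TB U; split.
- move=> [Us hU]; split => // mu Umu.
  have [eps [eps0 hball]] := hU _ Umu.
  have [s hs] := TB (eps / 4) (divr_gt0 eps0 (ltr0Sn _ 3)).
  exists s, (eps / 4); split; first exact: divr_gt0.
  move=> nu hnu hnear; apply: hball => //.
  have hmu := Us _ Umu.
  apply: (@le_lt_trans _ _ ((3 * eps / 4)%:E)); last by rewrite lte_fin; lra.
  apply: rho_le => a ha; have [b bs hb] := hs a ha.
  have h1 := hnear b bs.
  have h2 := state_diff_quot HA (a - b) hmu hnu.
  rewrite (linB _ _ (state_lin hmu)) (linB _ _ (state_lin hnu)) in h2.
  have -> : mu a - nu a = (mu a - mu b - (nu a - nu b)) - (nu b - mu b) by ring.
  apply: le_trans (ler_normB _ _) _.
  lra.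
- move=> [Us hU]; split => // mu Umu.
  have [s [eps [eps0 hnb]]] := hU _ Umu.
  pose K := 1 + \sum_(x <- s) L x.
  have S0 : 0 <= \sum_(x <- s) L x by apply: sumr_ge0 => x _; exact: L_ge0.
  have K0 : 0 < K by rewrite /K; lra.
  exists (eps / K); split; first exact: divr_gt0.
  move=> nu hnu hrho; apply: hnb => // a as_.
  pose c := L a + 1.
  have c0 : 0 < c by rewrite /c; have := L_ge0 a; lra.
  have hla : L (c^-1 *: a) <= 1.
    rewrite HL.2 ger0_norm ?invr_ge0 ?(ltW c0) // ler_pdivrMl // mulr1 /c; lra.
  have := rho_lt hla hrho.
  rewrite (linZ _ _ (state_lin (Us _ Umu))) (linZ _ _ (state_lin hnu)) -mulrBr.
  rewrite normrM ger0_norm ?invr_ge0 ?(ltW c0) // ltr_pdivrMl // => h.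
  rewrite distrC; apply: lt_le_trans h _.
  rewrite mulrA ler_pdivrMr // mulrC ler_pM2l // /c /K.
  by have := le_sum_seq as_; lra.
Qed.

End Main.
Section Topo.
Variables (R : realType) (V : lmodType R).
Definition RT : topologicalType := Topological.clone R _.
Definition PT := prod_topology (fun _ : V => RT).

Lemma proj_cont (x : V) : continuous (fun f : PT => f x).
Proof. exact: (@proj_continuous V (fun _ => RT) x). Qed.

Lemma open_nbhd (mu : V -> R) (s : seq V) (eps : R) :
  open [set g : PT | forall a, a \in s -> `|g a - mu a| < eps].
Proof.
elim: s => [|a s IH].
  rewrite (_ : [set g : PT | _] = setT); first exact: openT.
  by rewrite predeqE => g; split => // _ a; rewrite in_nil.
rewrite (_ : [set g : PT | _] = ((fun g : PT => g a) @^-1` [set y : RT | mu a - eps < y]) `&`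
   ((fun g : PT => g a) @^-1` [set y : RT | y < mu a + eps]) `&`
   [set g : PT | forall a, a \in s -> `|g a - mu a| < eps]).
  apply: openI => //; apply: openI; apply: open_comp => [g _|]; try exact: proj_cont.
  - exact: open_gt.
  - exact: open_lt.
rewrite predeqE => g; split.
- move=> h; have := h a (mem_head _ _); rewrite ltr_distl => /andP[h1 h2].
  by split; [split|] => // b bs; apply: h; rewrite in_cons bs orbT.
- move=> [[h1 h2] h3] b; rewrite in_cons => /orP[/eqP ->|bs]; last exact: h3.
  by rewrite ltr_distl h1 h2.
Qed.

Lemma approx (S : set PT) (f : PT) (s : seq V) (eps : R) : closure S f -> 0 < eps ->
  exists g : PT, S g /\ forall a, a \in s -> `|g a - f a| < eps.
Proof.
move=> cl eps0.
have nb : nbhs f [set g : PT | forall a, a \in s -> `|g a - f a| < eps].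
  apply: open_nbhs_nbhs; split; first exact: open_nbhd.
  by move=> a _; rewrite subrr normr0.
by have [g [Sg hg]] := cl _ nb; exists g.
Qed.

Variables (pos : set V) (e : V).
Hypothesis HA : is_order_unit_space pos e.

Lemma closed_states : closed [set f : PT | is_state pos e f].
Proof.
move=> f cl; split.
- move=> r x y; apply/eqP; rewrite -subr_eq0 -normr_le0; apply/ler_addgt0Pr => eta eta0.
  pose K := 3 + `|r|.
  have K0 : 0 < K by rewrite /K; have := normr_ge0 r; lra.
  have [g [[hl _ _] hg]] := approx [:: r *: x + y; x; y] cl (divr_gt0 eta0 K0).
  have h1 := hg _ (mem_head _ _).
  have h2 : `|g x - f x| < eta / K by apply: hg; rewrite !inE eqxx !orbT.
  have h3 : `|g y - f y| < eta / K by apply: hg; rewrite !inE eqxx !orbT.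
  have h4 : `|r * (g x - f x)| <= `|r| * (eta / K).
    by rewrite normrM; apply: ler_wpM2l => //; exact: ltW.
  have -> : f (r *: x + y) - (r * f x + f y) =
    - (g (r *: x + y) - f (r *: x + y)) + r * (g x - f x) + (g y - f y) by rewrite hl; ring.
  have hK : eta / K * (2 + `|r|) <= eta.
    apply: (@le_trans _ _ (eta / K * K)); last by rewrite divfK // gt_eqF.
    apply: ler_wpM2l; first by apply: divr_ge0 => //; exact: ltW.
    rewrite /K; lra.
  have := ler_normD (- (g (r *: x + y) - f (r *: x + y))) (r * (g x - f x)).
  rewrite normrN => h5.
  have h6 := ler_normD (- (g (r *: x + y) - f (r *: x + y)) + r * (g x - f x)) (g y - f y).
  have hK' : eta / K + `|r| * (eta / K) + eta / K <= eta by move: hK; rewrite mulrDr; lra.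
  lra.
- move=> x px; rewrite leNgt; apply/negP => fn.
  have [g [[_ hp _] hg]] := approx [:: x] cl (oppr_gt0' fn).
  have := hg _ (mem_head _ _); have := hp _ px; rewrite ltr_distl; move=> ? /andP[? ?]; lra.
- apply/eqP; rewrite -subr_eq0 -normr_le0; apply/ler_addgt0Pr => eta eta0.
  have [g [[_ _ he] hg]] := approx [:: e] cl eta0.
  have := hg _ (mem_head _ _); rewrite he add0r distrC => h; exact: ltW.
Qed.

Lemma compact_states : compact [set f : PT | is_state pos e f].
Proof.
have hk : forall a : V, exists k : R, forall mu, is_state pos e mu -> `|mu a| <= k.
  move=> a; have [r [r0 [h1 h2]]] := ou HA a; exists r => mu hmu.
  rewrite ler_norml; apply/andP; split; last exact: state_le hmu h2.
  rewrite lerNl -(linN _ (state_lin hmu)); apply: state_le hmu _; by rewrite opprK addrC.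
have [k hk'] := choice hk.
have ck := @tychonoff V (fun _ => RT) (fun a => `[- k a, k a]%classic) (fun a => @segment_compact R _ _).
apply: (subclosed_compact closed_states ck).
move=> f hf a /=; rewrite in_itv /= -ler_norml; exact: hk'.
Qed.

End Topo.

HB.instance Definition _ (R : realType) (V : lmodType R) :=
  isPointed.Build (prod_topology (fun _ : V => RT R)) (fun _ => 0 : RT R).

Section Grid.
Variables (R : realType) (X : Type).

Definition grid_goal (fs : seq (X -> R)) (eta : R) (B : set X) :=
  exists s : seq X, (forall b, List.In b s -> B b) /\
    forall a, B a -> exists b, List.In b s /\ forall f, List.In f fs -> `|f a - f b| < eta.

Lemma grid (fs : seq (X -> R)) (eta : R) : 0 < eta -> forall B : set X,
  (forall f, List.In f fs -> exists C, forall a, B a -> `|f a| <= C) -> grid_goal fs eta B.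
Proof.
move=> eta0; elim: fs => [|f fs IH] B hB.
  have [[b0 Bb0]|nB] := pselect (exists b, B b).
    exists [:: b0]; split; first by move=> b [<-|].
    by move=> a _; exists b0; split => //; left.
  by exists [::]; split => // a Ba; exfalso; apply: nB; exists a.
have [C hC] := hB f (or_introl erefl).
pose C' := `|C|.
have hC' a : B a -> `|f a| <= C' by move=> Ba; apply: le_trans (hC a Ba) (ler_norm C).
pose h := eta / 2.
have h0 : 0 < h by rewrite /h; lra.
have hBs (B' : set X) : B' `<=` B -> forall g, List.In g fs -> exists C, forall a, B' a -> `|g a| <= C.
  move=> sB g gin; have [Cg hg] := hB g (or_intror gin).
  by exists Cg => a /sB; exact: hg.
have claim (n : nat) : forall B' : set X, B' `<=` B ->
    (forall a, B' a -> - C' <= f a <= - C' + n%:R * h) -> grid_goal (f :: fs) eta B'.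
  elim: n => [|n IHn] B' sB hf.
    have [s [sB' hs]] := IH B' (hBs B' sB).
    exists s; split => // a Ba; have [b [bs hb]] := hs a Ba.
    exists b; split => // g [<-|gin]; last exact: hb.
    have := hf a Ba; have := hf b (sB' b bs); rewrite mul0r addr0.
    move=> /andP[? ?] /andP[? ?].
    have -> : f a - f b = 0 by lra.
    by rewrite normr0.
  pose Bl := B' `&` [set a | f a <= - C' + n%:R * h].
  pose Bt := B' `&` [set a | - C' + n%:R * h < f a].
  have [s1 [s1B hs1]] : grid_goal (f :: fs) eta Bl.
    apply: IHn; first by move=> a [/sB].
    by move=> a [/hf /andP[h1 _] h2]; rewrite h1 h2.
  have [s2 [s2B hs2]] := IH Bt (hBs Bt (fun a ha => sB a ha.1)).
  exists (s1 ++ s2); split.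
    by move=> b /List.in_app_iff [/s1B []|/s2B []].
  move=> a Ba; have [fl|ft] := leP (f a) (- C' + n%:R * h).
    have [b [bs hb]] := hs1 a (conj Ba fl).
    by exists b; split => //; apply/List.in_app_iff; left.
  have [b [bs hb]] := hs2 a (conj Ba ft).
  exists b; split; first by apply/List.in_app_iff; right.
  move=> g [<-|gin]; last exact: hb.
  have [Bb fb] := s2B b bs.
  have fb' : - C' + n%:R * h < f b := fb.
  have := hf a Ba; have := hf b Bb; rewrite -natr1 mulrDl mul1r.
  have eh : eta = 2 * h by rewrite /h; lra.
  move=> /andP[? ?] /andP[? ?]; rewrite ltr_distl; apply/andP; split; lra.
have C'0 : 0 <= C' by exact: normr_ge0.
apply: (claim (Num.Def.archi_bound (2 * C' / h))) => // a Ba.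
have := archi_boundP (divr_ge0 (mulr_ge0 (ler0n _ 2) C'0) (ltW h0)).
rewrite ltr_pdivrMr // => hn.
have := hC' a Ba; rewrite ler_norml => /andP[h1 h2]; rewrite h1 /=; lra.
Qed.

End Grid.
Lemma In_mem (T : eqType) (s : seq T) x : x \in s -> List.In x s.
Proof. by elim: s => // y s IH; rewrite in_cons => /orP[/eqP ->|/IH]; [left|right]. Qed.
Lemma mem_In (T : eqType) (s : seq T) x : List.In x s -> x \in s.
Proof. by elim: s => // y s IH [->|/IH]; rewrite in_cons ?eqxx // => ->; rewrite orbT. Qed.
Lemma In_map (T U : Type) (F : T -> U) (s : seq T) x : List.In x s -> List.In (F x) (map F s).
Proof. by elim: s => // y s IH [->|/IH]; [left|right]. Qed.
Lemma In_mapP (T U : Type) (F : T -> U) (s : seq T) y : List.In y (map F s) -> exists x, List.In x s /\ y = F x.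
Proof.
elim: s => // x s IH [<-|/IH [z [zs ->]]]; first by exists x; split => //; left.
by exists z; split => //; right.
Qed.

Section Main2.
Variables (R : realType) (V : lmodType R) (pos : set V) (e : V).
Hypothesis HA : is_order_unit_space pos e.
Variable L : V -> R.
Hypothesis HL : is_seminorm L.
Hypothesis H : rhoL_topology_is_weakstar pos e L.

Lemma finite_dist mu nu : is_state pos e mu -> is_state pos e nu ->
  exists C, forall a, L a <= 1 -> `|mu a - nu a| <= C.
Proof.
move=> hmu hnu.
pose U := fun xi => is_state pos e xi /\ exists C, forall a, L a <= 1 -> `|mu a - xi a| <= C.
have Uo : rhoL_open pos e L U.
  split; first by move=> xi [].
  move=> xi [hxi [C hC]]; exists 1; split => // zeta hz hr; split => //.
  exists (C + 1) => a ha; have := rho_lt ha hr; have := hC a ha.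
  have := ler_distD (xi a) (mu a) (zeta a); lra.
have [_ hw] := (H U).1 Uo.
have [s [eps [eps0 hnb]]] : exists (s : seq V) (eps : R), 0 < eps /\ forall xi, is_state pos e xi ->
    (forall a, a \in s -> `|xi a - mu a| < eps) -> U xi.
  apply: (hw mu); split => //; exists 0 => a _; by rewrite subrr normr0.
pose D := 1 + \sum_(a <- s) `|nu a - mu a|.
have S0 : 0 <= \sum_(a <- s) `|nu a - mu a| by apply: sumr_ge0 => x _.
have D0 : 0 < D by rewrite /D; lra.
pose t := eps / (eps + D).
have epsD : 0 < eps + D by lra.
have t0 : 0 < t by rewrite /t divr_gt0.
have t1 : t <= 1.
  rewrite /t ler_pdivrMr //; lra.
have tD : t * D < eps.
  rewrite /t mulrAC ltr_pdivrMr //; rewrite /D !mulrDr; have := mulr_gt0 eps0 eps0; lra.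
pose xi x := mu x + t * (nu x - mu x).
have hlmu := state_lin hmu; have hlnu := state_lin hnu.
have hxi : is_state pos e xi.
  split.
  - move=> r x y; rewrite /xi !(linD _ _ hlmu) !(linD _ _ hlnu) !(linZ _ _ hlmu) !(linZ _ _ hlnu); ring.
  - move=> x px; rewrite /xi; case: hmu => _ hp1 _; case: hnu => _ hp2 _.
    have := mulr_ge0 (ltW t0) (hp2 x px); have : 0 <= (1 - t) * mu x.
      by apply: mulr_ge0; [lra|exact: hp1].
    move=> h1 h2; have -> : mu x + t * (nu x - mu x) = (1 - t) * mu x + t * nu x by ring.
    lra.
  - by rewrite /xi; case: hmu => _ _ ->; case: hnu => _ _ ->; rewrite subrr mulr0 addr0.
have [_ [C hC]] : U xi.
  apply: hnb => // a as_; rewrite /xi addrAC subrr add0r normrM ger0_norm ?(ltW t0) //.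
  apply: le_lt_trans tD; apply: ler_wpM2l; first exact: ltW.
  have := le_sum_seqF (F := fun a => `|nu a - mu a|) (fun x => normr_ge0 (nu x - mu x)) as_; rewrite /D; lra.
exists (C / t) => a ha; have := hC a ha.
rewrite /xi opprD addrA subrr add0r normrN normrM ger0_norm ?(ltW t0) // => h.
by rewrite ler_pdivlMr // mulrC distrC.
Qed.

Lemma rho_tb (delta : R) : 0 < delta -> exists ms : seq (PT V),
  (forall m, List.In m ms -> is_state pos e m) /\
  forall nu, is_state pos e nu -> exists m, List.In m ms /\
    forall a, L a <= 1 -> `|m a - nu a| < delta.
Proof.
move=> d0.
pose W (mu : V -> R) := [set nu : V -> R | is_state pos e nu /\ (rhoL L mu nu < delta%:E)%E].
have Wo mu : rhoL_open pos e L (W mu).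
  split; first by move=> nu [].
  move=> nu [hnu hr].
  have r0 : (0%:E <= rhoL L mu nu)%E.
    have l0 : L 0 <= 1 by rewrite (L0 HL) ler01.
    by apply: le_trans (rho_ub mu nu l0); rewrite lee_fin; exact: normr_ge0.
  case E: (rhoL L mu nu) hr r0 => [r| |] //; rewrite lte_fin lee_fin => hr r0.
  exists ((delta - r) / 2); split; first by rewrite divr_gt0 // subr_gt0.
  move=> zeta hz hr2; split => //.
  apply: (@le_lt_trans _ _ ((r + (delta - r) / 2)%:E)); last by rewrite lte_fin; lra.
  apply: rho_le => a ha.
  have h1 : `|mu a - nu a| <= r by rewrite -lee_fin -E; exact: rho_ub.
  have h2 := rho_lt ha hr2.
  have := ler_distD (nu a) (mu a) (zeta a); lra.
pose Wit (mu : V -> R) := [set w : seq V * R | 0 < w.2 /\ forall nu, is_state pos e nu ->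
    (forall a, a \in w.1 -> `|nu a - mu a| < w.2) -> W mu nu].
pose N (mu : PT V) : set (PT V) :=
  \bigcup_(w in Wit mu) [set g : PT V | forall a, a \in w.1 -> `|g a - mu a| < w.2].
have cc := compact_states HA.
rewrite compact_cover in cc.
have hop : forall mu, [set mu : PT V | is_state pos e mu] mu -> open (N mu).
  by move=> mu _; apply: bigcup_open => w _; exact: open_nbhd.
have hcov : [set mu : PT V | is_state pos e mu] `<=` cover [set mu : PT V | is_state pos e mu] N.
  move=> mu hmu; exists mu => //.
  have [_ hw] := (H (W mu)).1 (Wo mu).
  have hmm : (rhoL L mu mu < delta%:E)%E.
    apply: le_lt_trans (rho_le (c := 0) _) _; last by rewrite lte_fin.
    by move=> a _; rewrite subrr normr0.
  have [s [eps [eps0 hnb]]] := hw mu (conj hmu hmm).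
  exists (s, eps) => //=; last by move=> a _; rewrite subrr normr0.
have [D' sD cov] := cc _ _ N hop hcov.
exists (finmap.enum_fset D'); split; first by move=> m /mem_In /sD /set_mem.
move=> nu hnu; have [m mD [w [w0 hw] hnw]] := cov nu hnu.
exists m; split; first exact: In_mem.
have [_ hr] := hw nu hnu hnw.
by move=> a ha; exact: rho_lt ha hr.
Qed.

End Main2.
Section Main3.
Variables (R : realType) (V : lmodType R) (pos : set V) (e : V).
Hypothesis HA : is_order_unit_space pos e.
Variable L : V -> R.
Hypothesis HL : is_seminorm L.

Lemma part_b_tw : rhoL_topology_is_weakstar pos e L -> B1_quot_totally_bounded pos e L.
Proof.
move=> H eps eps0.
have [e0|ne] := eqVneq e 0.
  exists [:: 0] => a _; exists 0; first by rewrite inE.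
  by rewrite (e0_triv HA e0 a) subrr; exact: le_lt_trans (quot0 HA) eps0.
have [ms [msS hms]] := rho_tb HA HL H (divr_gt0 eps0 (ltr0Sn _ 7)).
have [mu0 [hmu0 _]] := exists_state HA 0 ne.
pose F (m : PT V) : V -> R := fun x => m x - mu0 x.
pose fs := map F ms.
have hb : forall f, List.In f fs -> exists C, forall a, [set a | L a <= 1] a -> `|f a| <= C.
  move=> f hf; have [m [mms ->]] := In_mapP hf; have [C hC] := finite_dist H (msS _ mms) hmu0.
  by exists C => a ha; exact: hC a ha.
have [s [sB hs]] := @grid R V fs (eps / 2) (divr_gt0 eps0 (ltr0Sn _ 1)) [set a | L a <= 1] hb.
exists s => a ha.
have [b [bs hab]] := hs a ha.
exists b; first exact: mem_In bs.
have hbB : L b <= 1 := sB b bs.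
have [mu [nu [hmu hnu hq]]] := key_est HA (a - b) ne.
have [m1 [m1s h1]] := hms mu hmu.
have [m2 [m2s h2]] := hms nu hnu.
have f1 := hab (F m1) (In_map F m1s).
have f2 := hab (F m2) (In_map F m2s).
rewrite /F in f1 f2.
rewrite (linB _ _ (state_lin hmu)) (linB _ _ (state_lin hnu)) in hq.
have := h1 a ha; have := h1 b hbB; have := h2 a ha; have := h2 b hbB.
move: f1 f2; rewrite !ltr_norml.
move=> /andP[? ?] /andP[? ?] /andP[? ?] /andP[? ?] /andP[? ?] /andP[? ?].
lra.
Qed.

End Main3.

Theorem theorem2p1 (R : realType) (V : lmodType R) (pos : set V) (e : V)
  (HA : is_order_unit_space pos e) (L : V -> R) (HL : is_seminorm L)
  (HL1 : L e = 0) :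
  (finite_diameter pos e L <-> B1_quot_bounded pos e L) /\
  (rhoL_topology_is_weakstar pos e L <-> B1_quot_totally_bounded pos e L).
Proof.
split; first exact: part_a HA L.
split; first by move=> H0; apply: (part_b_tw HA HL H0).
by move=> h; apply: (part_b_wk HA HL h).
Qed.
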